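(* Let $T$ be a rooted binary phylogenetic tree under the $N_2$ model. Then $RA_{\rm MP}(T)\ge RA_\varphi(T)$.
   Context: A rooted binary phylogenetic tree is a finite tree with a distinguished root vertex $\rho$ of out-degree 2, all edges directed away from $\rho$, and every other vertex of in-degree 1 and out-degree 0 or 2; out-degree-0 vertices are leaves, forming the leaf set $X$. Under the Neyman 2-state model $N_2$, each edge $e$ carries a substitution probability $p_e\in[0,\frac12]$; given the root state $F(\rho)$, states propagate independently along edges, each edge changing state with probability $p_e$; $f=F|_X$. Fitch sets: each leaf $x$ gets $\{f(x)\}$; a vertex with children $v_1,v_2$ gets $\mathrm{FS}(v_1)\cap\mathrm{FS}(v_2)$ if nonempty, else the union. $\mathrm{MP}(f,T)$ is a uniformly random element of $\mathrm{FS}(\rho)$, and $RA_{\rm MP}(T)=\mathbb P(\mathrm{MP}(f,T)=\alpha\mid F(\rho)=\alpha)$. The coin-toss method $\varphi$: leaves get their states; proceeding towards the root, a vertex whose two children have equal states gets that state, otherwise one of the two chosen by an independent fair coin toss; $RA_\varphi(T)$ is the probability that the state assigned to $\rho$ equals $F(\rho)$. *)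

(* Defs.v *)
From Stdlib Require Import Reals List Bool.
Import ListNotations.
Open Scope R_scope.

(* Rooted binary tree: a leaf, or an internal vertex with two children; each
   child edge carries its substitution probability p_e. Leaves are ordered
   left to right; a leaf-state assignment f is a list of states, one per leaf. *)
Inductive tree : Type :=
| Leaf : tree
| Node : R -> tree -> R -> tree -> tree.

Definition is_node (T : tree) : Prop :=
  match T with Leaf => False | Node _ _ _ _ => True end.

Fixpoint valid_params (T : tree) : Prop :=
  match T with
  | Leaf => True
  | Node p1 t1 p2 t2 =>
      0 <= p1 <= /2 /\ valid_params t1 /\ 0 <= p2 <= /2 /\ valid_params t2
  end.

Fixpoint nleaves (T : tree) : nat :=
  match T with Leaf => 1%nat | Node _ t1 _ t2 => (nleaves t1 + nleaves t2)%nat end.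

Definition trans (p : R) (a b : bool) : R := if Bool.eqb a b then 1 - p else p.

(* P(f = leaf states | state at the top vertex of T is a) *)
Fixpoint prob (T : tree) (a : bool) (f : list bool) : R :=
  match T with
  | Leaf => match f with [b] => if Bool.eqb a b then 1 else 0 | _ => 0 end
  | Node p1 t1 p2 t2 =>
      let f1 := firstn (nleaves t1) f in
      let f2 := skipn (nleaves t1) f in
      (trans p1 a false * prob t1 false f1 + trans p1 a true * prob t1 true f1) *
      (trans p2 a false * prob t2 false f2 + trans p2 a true * prob t2 true f2)
  end.

(* Fitch sets, as membership predicates on the state set {false,true} *)
Definition fset := bool -> bool.

Fixpoint fitch (T : tree) (f : list bool) : fset :=
  match T with
  | Leaf => fun b => Bool.eqb b (hd false f)
  | Node _ t1 _ t2 =>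
      let s1 := fitch t1 (firstn (nleaves t1) f) in
      let s2 := fitch t2 (skipn (nleaves t1) f) in
      let i := fun b => s1 b && s2 b in
      if i false || i true then i else fun b => s1 b || s2 b
  end.

Definition fsize (s : fset) : R :=
  (if s false then 1 else 0) + (if s true then 1 else 0).

(* P(MP(f,T) = a | f): uniform choice in the root Fitch set *)
Definition mp_hit (s : fset) (a : bool) : R := if s a then / fsize s else 0.

(* coin T f s = P(coin-toss method assigns state s to the top vertex | f) *)
Fixpoint coin (T : tree) (f : list bool) (s : bool) : R :=
  match T with
  | Leaf => if Bool.eqb s (hd false f) then 1 else 0
  | Node _ t1 _ t2 =>
      let q1 := coin t1 (firstn (nleaves t1) f) in
      let q2 := coin t2 (skipn (nleaves t1) f) in
      q1 s * q2 s + / 2 * (q1 s * q2 (negb s) + q1 (negb s) * q2 s)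
  end.

Fixpoint all_lists (n : nat) : list (list bool) :=
  match n with
  | O => [[]]
  | S m => map (cons false) (all_lists m) ++ map (cons true) (all_lists m)
  end.

Definition sumR (l : list (list bool)) (g : list bool -> R) : R :=
  fold_right (fun x acc => g x + acc) 0 l.

Definition RA_MP (T : tree) (a : bool) : R :=
  sumR (all_lists (nleaves T)) (fun f => prob T a f * mp_hit (fitch T f) a).

Definition RA_phi (T : tree) (a : bool) : R :=
  sumR (all_lists (nleaves T)) (fun f => prob T a f * coin T f a).

(* Main.v *)
Require Import Defs.
From Stdlib Require Import Reals.
From Stdlib Require Import Lra Lia List Bool.
Import ListNotations.
Open Scope R_scope.

Lemma sumR_nil g : sumR [] g = 0. Proof. reflexivity. Qed.
Lemma sumR_cons a l g : sumR (a :: l) g = g a + sumR l g. Proof. reflexivity. Qed.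

Lemma sumR_app l1 l2 g : sumR (l1 ++ l2) g = sumR l1 g + sumR l2 g.
Proof.
  induction l1 as [|a l1 IH]; cbn [app].
  - rewrite sumR_nil; ring.
  - rewrite !sumR_cons, IH; ring.
Qed.

Lemma sumR_map (k : list bool -> list bool) l g :
  sumR (map k l) g = sumR l (fun y => g (k y)).
Proof.
  induction l as [|a l IH]; cbn [map]; [reflexivity|].
  rewrite !sumR_cons, IH; reflexivity.
Qed.

Lemma sumR_ext_in l g h : (forall y, In y l -> g y = h y) -> sumR l g = sumR l h.
Proof.
  induction l as [|a l IH]; intros H; [reflexivity|].
  rewrite !sumR_cons, (H a (in_eq a l)), IH; [reflexivity|].
  intros; apply H; right; auto.
Qed.

Lemma sumR_plus l g h : sumR l (fun y => g y + h y) = sumR l g + sumR l h.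
Proof.
  induction l as [|a l IH]; [rewrite !sumR_nil; ring|].
  rewrite !sumR_cons, IH; ring.
Qed.

Lemma sumR_scal l c g : sumR l (fun y => c * g y) = c * sumR l g.
Proof.
  induction l as [|a l IH]; [rewrite !sumR_nil; ring|].
  rewrite !sumR_cons, IH; ring.
Qed.

Lemma sumR_scal_r l c g : sumR l (fun y => g y * c) = sumR l g * c.
Proof.
  induction l as [|a l IH]; [rewrite !sumR_nil; ring|].
  rewrite !sumR_cons, IH; ring.
Qed.

Lemma sumR_nonneg l g : (forall y, In y l -> 0 <= g y) -> 0 <= sumR l g.
Proof.
  induction l as [|a l IH]; intros H; [rewrite sumR_nil; lra|].
  rewrite sumR_cons. assert (0 <= g a) by (apply H; left; auto).
  assert (0 <= sumR l g) by (apply IH; intros; apply H; right; auto). lra.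
Qed.

Lemma sumR_all_S n h : sumR (all_lists (S n)) h =
  sumR (all_lists n) (fun f => h (false :: f)) + sumR (all_lists n) (fun f => h (true :: f)).
Proof.
  change (all_lists (S n)) with
    (map (cons false) (all_lists n) ++ map (cons true) (all_lists n)).
  rewrite sumR_app, !sumR_map; reflexivity.
Qed.

Lemma all_lists_length n f : In f (all_lists n) -> length f = n.
Proof.
  revert f; induction n as [|n IH]; intros f H.
  - simpl in H; destruct H as [<-|[]]; reflexivity.
  - change (all_lists (S n)) with
      (map (cons false) (all_lists n) ++ map (cons true) (all_lists n)) in H.
    apply in_app_or in H; destruct H as [H|H]; apply in_map_iff in H;
      destruct H as [g [<- Hg]]; simpl; f_equal; auto.
Qed.

Lemma sumR_split n1 n2 g : sumR (all_lists (n1 + n2)) g =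
  sumR (all_lists n1) (fun f1 => sumR (all_lists n2) (fun f2 => g (f1 ++ f2))).
Proof.
  revert g; induction n1 as [|n1 IH]; intros g.
  - change (0 + n2)%nat with n2. change (all_lists 0) with [@nil bool].
    rewrite sumR_cons, sumR_nil, Rplus_0_r. reflexivity.
  - change (S n1 + n2)%nat with (S (n1 + n2)).
    rewrite !sumR_all_S, !IH. reflexivity.
Qed.

Lemma sumR_prod (L1 L2 : list (list bool)) F G :
  sumR L1 (fun a => sumR L2 (fun b => F a * G b)) = sumR L1 F * sumR L2 G.
Proof.
  rewrite (sumR_ext_in L1 _ (fun a => F a * sumR L2 G)).
  - apply sumR_scal_r.
  - intros; apply sumR_scal.
Qed.

Lemma firstn_app_len (f1 f2 : list bool) n : length f1 = n -> firstn n (f1 ++ f2) = f1.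
Proof. intros <-; induction f1; simpl; [reflexivity| f_equal; assumption]. Qed.
Lemma skipn_app_len (f1 f2 : list bool) n : length f1 = n -> skipn n (f1 ++ f2) = f2.
Proof. intros <-; induction f1; simpl; [reflexivity| assumption]. Qed.

Lemma my_firstn_map n (f : list bool) : firstn n (map negb f) = map negb (firstn n f).
Proof. revert f; induction n; destruct f; simpl; auto; rewrite IHn; reflexivity. Qed.
Lemma my_skipn_map n (f : list bool) : skipn n (map negb f) = map negb (skipn n f).
Proof. revert f; induction n; destruct f; simpl; auto. Qed.
Lemma len_firstn n1 n2 (f : list bool) : length f = (n1 + n2)%nat -> length (firstn n1 f) = n1.
Proof. revert f; induction n1; destruct f; simpl; intros; auto; lia. Qed.
Lemma len_skipn n1 n2 (f : list bool) : length f = (n1 + n2)%nat -> length (skipn n1 f) = n2.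
Proof. revert f; induction n1; destruct f; simpl; intros; auto; lia. Qed.

Definition S T x (e : list bool -> R) :=
  sumR (all_lists (nleaves T)) (fun f => prob T x f * e f).
Definition addf (e e' : list bool -> R) := fun f => e f + e' f.
Definition scalf (c : R) (e : list bool -> R) := fun f => c * e f.
Definition P n (e1 e2 : list bool -> R) := fun f => e1 (firstn n f) * e2 (skipn n f).
Definition E p t x e := trans p x false * S t false e + trans p x true * S t true e.

Lemma S_ext T x e e' : (forall f, length f = nleaves T -> e f = e' f) -> S T x e = S T x e'.
Proof.
  intros H; unfold S; apply sumR_ext_in; intros f Hf.
  rewrite H; [reflexivity| apply all_lists_length; auto].
Qed.

Lemma S_addf T x e e' : S T x (addf e e') = S T x e + S T x e'.
Proof. unfold S, addf; rewrite <- sumR_plus; apply sumR_ext_in; intros; ring. Qed.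
Lemma S_scalf T x c e : S T x (scalf c e) = c * S T x e.
Proof. unfold S, scalf; rewrite <- sumR_scal; apply sumR_ext_in; intros; ring. Qed.

Lemma sumR_E p t x e :
  sumR (all_lists (nleaves t)) (fun f => (trans p x false * prob t false f + trans p x true * prob t true f) * e f) = E p t x e.
Proof.
  unfold E, S. rewrite <- !sumR_scal, <- sumR_plus. apply sumR_ext_in; intros; cbv beta; ring.
Qed.

Lemma S_node p1 t1 p2 t2 x e1 e2 :
  S (Node p1 t1 p2 t2) x (P (nleaves t1) e1 e2) = E p1 t1 x e1 * E p2 t2 x e2.
Proof.
  unfold S at 1. cbn [nleaves]. rewrite sumR_split.
  rewrite <- !sumR_E, <- sumR_prod.
  apply sumR_ext_in; intros f1 H1. apply sumR_ext_in; intros f2 H2.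
  apply all_lists_length in H1.
  unfold P. cbn [prob]. rewrite firstn_app_len, skipn_app_len by assumption. ring.
Qed.

Lemma E_eq p t x e : E p t x e = (1 - p) * S t x e + p * S t (negb x) e.
Proof. destruct x; unfold E, trans; simpl; ring. Qed.

Lemma prob_sym T : forall f, length f = nleaves T -> forall x, prob T x (map negb f) = prob T (negb x) f.
Proof.
  induction T as [|p1 t1 IH1 p2 t2 IH2]; intros f Hf x.
  - destruct f as [|c [|]]; simpl in Hf; try discriminate. destruct x, c; reflexivity.
  - cbn [prob]. simpl in Hf.
    rewrite my_firstn_map, my_skipn_map, !IH1, !IH2.
    + destruct x; unfold trans; simpl; ring.
    + eapply len_skipn; eauto. + eapply len_skipn; eauto.
    + eapply len_firstn; eauto. + eapply len_firstn; eauto.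
Qed.

Lemma fitch_ne T : forall f, fitch T f false || fitch T f true = true.
Proof.
  induction T as [|p1 t1 IH1 p2 t2 IH2]; intros f.
  - simpl. destruct (hd false f); reflexivity.
  - cbn [fitch].
    pose proof (IH1 (firstn (nleaves t1) f)) as H1.
    pose proof (IH2 (skipn (nleaves t1) f)) as H2.
    set (a := fitch t1 (firstn (nleaves t1) f)) in *.
    set (b := fitch t2 (skipn (nleaves t1) f)) in *.
    clearbody a b. cbv beta zeta.
    destruct (a false) eqn:E1, (a true) eqn:E2, (b false) eqn:E3, (b true) eqn:E4; simpl in *; try discriminate; rewrite ?E1, ?E2, ?E3, ?E4; reflexivity.
Qed.

Lemma fitch_sym T : forall f, length f = nleaves T -> forall z, fitch T (map negb f) z = fitch T f (negb z).
Proof.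
  induction T as [|p1 t1 IH1 p2 t2 IH2]; intros f Hf z.
  - destruct f as [|c [|]]; simpl in Hf; try discriminate. destruct z, c; reflexivity.
  - cbn [fitch]. simpl in Hf.
    rewrite my_firstn_map, my_skipn_map.
    assert (HA := IH1 (firstn (nleaves t1) f) ltac:(eapply len_firstn; eauto)).
    assert (HB := IH2 (skipn (nleaves t1) f) ltac:(eapply len_skipn; eauto)).
    remember (fitch t1 (map negb (firstn (nleaves t1) f))) as A.
    remember (fitch t2 (map negb (skipn (nleaves t1) f))) as B.
    set (a := fitch t1 (firstn (nleaves t1) f)) in *.
    set (b := fitch t2 (skipn (nleaves t1) f)) in *.
    cbv beta zeta. rewrite !HA, !HB. simpl negb.
    destruct z; simpl;
    destruct (a false) eqn:E1, (a true) eqn:E2, (b false) eqn:E3, (b true) eqn:E4; simpl;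
    rewrite ?HA, ?HB; simpl; rewrite ?E1, ?E2, ?E3, ?E4; reflexivity.
Qed.

Lemma coin_sym T : forall f, length f = nleaves T -> forall z, coin T (map negb f) z = coin T f (negb z).
Proof.
  induction T as [|p1 t1 IH1 p2 t2 IH2]; intros f Hf z.
  - destruct f as [|c [|]]; simpl in Hf; try discriminate. destruct z, c; reflexivity.
  - cbn [coin]. simpl in Hf.
    rewrite my_firstn_map, my_skipn_map.
    rewrite !(IH1 (firstn (nleaves t1) f)) by (eapply len_firstn; eauto).
    rewrite !(IH2 (skipn (nleaves t1) f)) by (eapply len_skipn; eauto).
    reflexivity.
Qed.

Lemma sumR_negb n : forall g, sumR (all_lists n) (fun f => g (map negb f)) = sumR (all_lists n) g.
Proof.
  induction n as [|n IH]; intros g; [reflexivity|].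
  rewrite !sumR_all_S.
  pose proof (IH (fun f => g (true :: f))) as H1.
  pose proof (IH (fun f => g (false :: f))) as H2.
  cbv beta in H1, H2. cbn [map negb]. rewrite H1, H2. ring.
Qed.

Lemma S_neg T x e : S T (negb x) e = S T x (fun f => e (map negb f)).
Proof.
  unfold S. rewrite <- (sumR_negb _ (fun f => prob T (negb x) f * e f)).
  apply sumR_ext_in; intros f Hf. apply all_lists_length in Hf.
  rewrite prob_sym by assumption. rewrite negb_involutive. reflexivity.
Qed.

Definition only (s : fset) (z : bool) : R := if s z && negb (s (negb z)) then 1 else 0.
Definition both (s : fset) : R := if s false && s true then 1 else 0.

Lemma S_neg_only t x z :
  S t (negb x) (fun g => only (fitch t g) z) = S t x (fun g => only (fitch t g) (negb z)).
Proof.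
  rewrite S_neg. apply S_ext; intros f Hf. unfold only.
  rewrite !fitch_sym by assumption. rewrite negb_involutive. reflexivity.
Qed.

Lemma S_neg_both t x :
  S t (negb x) (fun g => both (fitch t g)) = S t x (fun g => both (fitch t g)).
Proof.
  rewrite S_neg. apply S_ext; intros f Hf. unfold both.
  rewrite !fitch_sym by assumption. simpl. rewrite andb_comm. reflexivity.
Qed.

Lemma S_neg_coin t x z :
  S t (negb x) (fun g => coin t g z) = S t x (fun g => coin t g (negb z)).
Proof.
  rewrite S_neg. apply S_ext; intros f Hf. rewrite coin_sym by assumption. reflexivity.
Qed.

Lemma S_total T : forall y, S T y (fun _ => 1) = 1.
Proof.
  induction T as [|p1 t1 IH1 p2 t2 IH2]; intros y.
  - unfold S; simpl. destruct y; simpl; ring.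
  - rewrite (S_ext _ _ _ (P (nleaves t1) (fun _ => 1) (fun _ => 1)))
      by (intros; unfold P; ring).
    rewrite S_node, !E_eq, !IH1, !IH2. ring.
Qed.

Lemma coin_sum T : forall f x, coin T f x + coin T f (negb x) = 1.
Proof.
  induction T as [|p1 t1 IH1 p2 t2 IH2]; intros f x.
  - simpl. destruct x, (hd false f); simpl; lra.
  - cbn [coin]. rewrite negb_involutive.
    pose proof (IH1 (firstn (nleaves t1) f) x) as H1.
    pose proof (IH2 (skipn (nleaves t1) f) x) as H2.
    set (a := coin t1 (firstn (nleaves t1) f)) in *.
    set (b := coin t2 (skipn (nleaves t1) f)) in *.
    replace (a (negb x)) with (1 - a x) by lra.
    replace (b (negb x)) with (1 - b x) by lra. lra.
Qed.

Lemma part t y : S t y (fun g => only (fitch t g) y) + S t y (fun g => only (fitch t g) (negb y))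
  + S t y (fun g => both (fitch t g)) = 1.
Proof.
  rewrite <- (S_total t y). rewrite <- S_addf, <- S_addf. apply S_ext; intros f _.
  unfold addf, only, both. pose proof (fitch_ne t f).
  destruct y; simpl negb; destruct (fitch t f false), (fitch t f true); simpl in *; try discriminate; lra.
Qed.

Lemma coin_part t y : S t y (fun g => coin t g y) + S t y (fun g => coin t g (negb y)) = 1.
Proof.
  rewrite <- (S_total t y). rewrite <- S_addf. apply S_ext; intros f _.
  unfold addf. apply coin_sum.
Qed.

Lemma mp_child t y : S t y (fun f => mp_hit (fitch t f) y) =
  S t y (fun g => only (fitch t g) y) + /2 * S t y (fun g => both (fitch t g)).
Proof.
  rewrite <- S_scalf, <- S_addf. apply S_ext; intros f _.
  unfold addf, scalf, mp_hit, fsize, only, both. pose proof (fitch_ne t f).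
  destruct y; simpl negb; destruct (fitch t f false), (fitch t f true); simpl in *; try discriminate;
  rewrite ?Rplus_0_r, ?Rplus_0_l, ?Rinv_1; try lra.
  all: replace (1+1) with 2 by ring; lra.
Qed.

Lemma prob_nonneg T : valid_params T -> forall x f, 0 <= prob T x f.
Proof.
  induction T as [|p1 t1 IH1 p2 t2 IH2]; intros HV x f.
  - destruct f as [|b [|]]; simpl; try lra. destruct (Bool.eqb x b); lra.
  - simpl in HV. destruct HV as [Hp1 [V1 [Hp2 V2]]].
    cbn [prob].
    assert (Ht : forall p a b, 0 <= p <= /2 -> 0 <= trans p a b)
      by (intros; unfold trans; destruct (Bool.eqb a b); lra).
    apply Rmult_le_pos; apply Rplus_le_le_0_compat; apply Rmult_le_pos; auto.
Qed.

Lemma both_nonneg t y : valid_params t -> 0 <= S t y (fun g => both (fitch t g)).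
Proof.
  intros HV. unfold S. apply sumR_nonneg; intros f _.
  apply Rmult_le_pos; [apply prob_nonneg; auto|].
  unfold both; destruct (_ && _); lra.
Qed.

Lemma mp_root p1 t1 p2 t2 x f :
  mp_hit (fitch (Node p1 t1 p2 t2) f) x =
  (let n := nleaves t1 in
   let O1 := fun g => only (fitch t1 g) x in
   let N1 := fun g => only (fitch t1 g) (negb x) in
   let B1 := fun g => both (fitch t1 g) in
   let O2 := fun g => only (fitch t2 g) x in
   let N2 := fun g => only (fitch t2 g) (negb x) in
   let B2 := fun g => both (fitch t2 g) in
   addf (P n O1 O2) (addf (P n O1 B2) (addf (P n B1 O2)
     (scalf (/2) (addf (P n O1 N2) (addf (P n N1 O2) (P n B1 B2))))))) f.
Proof.
  cbv zeta. unfold addf, scalf, P. cbn [fitch]. cbv beta zeta.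
  pose proof (fitch_ne t1 (firstn (nleaves t1) f)) as H1.
  pose proof (fitch_ne t2 (skipn (nleaves t1) f)) as H2.
  set (a := fitch t1 (firstn (nleaves t1) f)) in *.
  set (b := fitch t2 (skipn (nleaves t1) f)) in *.
  unfold mp_hit, fsize, only, both.
  clearbody a b.
  destruct x; simpl negb; destruct (a false) eqn:E1, (a true) eqn:E2, (b false) eqn:E3, (b true) eqn:E4; simpl in *; try discriminate;
  rewrite ?E1, ?E2, ?E3, ?E4; simpl;
  rewrite ?Rplus_0_r, ?Rplus_0_l, ?Rinv_1; try lra.
  all: replace (1+1) with 2 by ring; lra.
Qed.

Lemma main T : valid_params T -> forall x,
  S T x (fun f => mp_hit (fitch T f) x) >= S T x (fun f => coin T f x) /\
  S T x (fun f => mp_hit (fitch T f) x) >= /2.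
Proof.
  induction T as [|p1 t1 IH1 p2 t2 IH2]; intros HV x.
  - unfold S; simpl. unfold mp_hit, fsize.
    destruct x; simpl; rewrite ?Rplus_0_r, ?Rplus_0_l, ?Rinv_1; lra.
  - simpl in HV. destruct HV as [Hp1 [V1 [Hp2 V2]]].
    specialize (IH1 V1 x). specialize (IH2 V2 x).
    rewrite !mp_child in IH1, IH2.
    pose proof (part t1 x) as Pa1. pose proof (part t2 x) as Pa2.
    pose proof (coin_part t1 x) as C1. pose proof (coin_part t2 x) as C2.
    pose proof (both_nonneg t1 x V1) as W1. pose proof (both_nonneg t2 x V2) as W2.
    rewrite (S_ext _ _ _ _ (fun f _ => mp_root p1 t1 p2 t2 x f)).
    cbv zeta.
    rewrite (S_ext _ x (fun f => coin (Node p1 t1 p2 t2) f x)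
      (addf (P (nleaves t1) (fun g => coin t1 g x) (fun g => coin t2 g x))
        (scalf (/2) (addf (P (nleaves t1) (fun g => coin t1 g x) (fun g => coin t2 g (negb x)))
                          (P (nleaves t1) (fun g => coin t1 g (negb x)) (fun g => coin t2 g x))))))
      by (intros; reflexivity).
    rewrite !S_addf, !S_scalf, !S_addf, !S_node, !E_eq.
    rewrite !S_neg_only, !S_neg_both, !S_neg_coin, !negb_involutive.
    set (u1 := S t1 x (fun g => only (fitch t1 g) x)) in *.
    set (v1 := S t1 x (fun g => only (fitch t1 g) (negb x))) in *.
    set (w1 := S t1 x (fun g => both (fitch t1 g))) in *.
    set (c1 := S t1 x (fun g => coin t1 g x)) in *.
    set (d1 := S t1 x (fun g => coin t1 g (negb x))) in *.
    set (u2 := S t2 x (fun g => only (fitch t2 g) x)) in *.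
    set (v2 := S t2 x (fun g => only (fitch t2 g) (negb x))) in *.
    set (w2 := S t2 x (fun g => both (fitch t2 g))) in *.
    set (c2 := S t2 x (fun g => coin t2 g x)) in *.
    set (d2 := S t2 x (fun g => coin t2 g (negb x))) in *.
    clearbody u1 v1 w1 c1 d1 u2 v2 w2 c2 d2.
    assert (Hv1 : v1 = 1 - u1 - w1) by lra. assert (Hv2 : v2 = 1 - u2 - w2) by lra.
    assert (Hd1 : d1 = 1 - c1) by lra. assert (Hd2 : d2 = 1 - c2) by lra.
    subst v1 v2 d1 d2.
    destruct IH1 as [I1 J1]. destruct IH2 as [I2 J2].
    assert (K1 : 0 <= (1 - 2*p1) * (u1 + /2*w1 - c1)) by (apply Rmult_le_pos; lra).
    assert (K2 : 0 <= (1 - 2*p2) * (u2 + /2*w2 - c2)) by (apply Rmult_le_pos; lra).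
    assert (L1 : 0 <= (1 - 2*p1) * (u1 + /2*w1 - /2)) by (apply Rmult_le_pos; lra).
    assert (L2 : 0 <= (1 - 2*p2) * (u2 + /2*w2 - /2)) by (apply Rmult_le_pos; lra).
    assert (M1 : 0 <= w2 * ((1 - 2*p1) * (u1 + /2*w1 - /2))) by (apply Rmult_le_pos; lra).
    assert (M2 : 0 <= w1 * ((1 - 2*p2) * (u2 + /2*w2 - /2))) by (apply Rmult_le_pos; lra).
    split; nra.
Qed.

Theorem theorem5 (T : tree) (a : bool) :
  is_node T -> valid_params T -> RA_MP T a >= RA_phi T a.
Proof.
  intros _ HV. destruct (main T HV a) as [H _]. exact H.
Qed.
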